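(* Let $\mathcal U=(V,\tilde V,W,\tilde W,R)$ be an ordered gradient space. The following are equivalent: (a) every pair $u_1,u_2\in V_+$ has a $V_+$-least upper bound; (b) for all $u_1,u_2\in V_+$, $\max(u_1,u_2)$ is the $V_+$-least upper bound of $u_1,u_2$; (c) $V_+$ (with the order $\le$) is a lattice; (d) every pair $u_1,u_2\in V_+$ has a $V_+$-greatest lower bound; (e) for all $u_1,u_2\in V_+$, $\min(u_1,u_2)$ is the $V_+$-greatest lower bound of $u_1,u_2$.
   Context: A gradient space $\mathcal U=(V,\tilde V,W,\tilde W,R)$ consists of vector spaces $\tilde V,\tilde W$ over $\mathbf R$ or $\mathbf C$, a relation $R\subseteq\tilde V\times\tilde W$ closed under addition and under multiplication by positive scalars, and linear subspaces $V\subseteq\tilde V$, $W\subseteq\tilde W$ such that $V$ is a reflexive Banach space (norm $\|\cdot\|_V$), $W$ is a reflexive strictly convex Banach space, for every $(u,g)\in R\cap(V\times W)$ there is $g'\in W$ with $(-u,g')\in R$, and $R\cap(V\times W)$ is closed in $V\times W$. A linear preorder on $\tilde V$ is a relation $\le$ with: $a\le a$; $a\le b,\ b\le c\Rightarrow a\le c$; $b\le c\Rightarrow a+b\le a+c$; $a\le b,\ \alpha\in[0,\infty)\Rightarrow\alpha a\le\alpha b$. A preordered gradient space is a gradient space with a linear preorder $\le$ on $\tilde V$ such that if $u_i\in V$, $\psi\in\tilde V$, $u_i\le\psi$ for all $i$ and $u_i\to u$ in $V$, then $u\le\psi$. An ordered gradient space is a preordered gradient space such that $V$ is strictly convex and,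 for $u,v\in V$, $0\le u\le v$ implies $\|u\|_V\le\|v\|_V$ (then $\le$ is a partial order on $V$). Let $V_+=\{v\in V:v\ge0\}$ and $B_+=\{\psi\in\tilde V:0\le\psi\le u\text{ for some }u\in V\}$. For $\psi_1,\psi_2\in B_+$: $\max(\psi_1,\psi_2)$ is the unique element $u$ of $\Omega(\psi_1,\psi_2)=\{u\in V:u\ge\psi_1,\ u\ge\psi_2\}$ minimizing $\|u\|_V$ over $\Omega(\psi_1,\psi_2)$; $\min(\psi_1,\psi_2)$ is the unique element $u$ of $\Omega'(\psi_1,\psi_2)=\{v\in V:0\le v\le\psi_1,\ v\le\psi_2\}$ minimizing $\|\max(\psi_1,\psi_2)-v\|_V$ over $\Omega'(\psi_1,\psi_2)$ (both exist and are unique). An upper bound $v\in V_+$ of $\psi_1,\psi_2$ is a $V_+$-least upper bound if $v\le u$ for every upper bound $u\in V_+$ of $\psi_1,\psi_2$; $V_+$-greatest lower bounds (lower bounds in $V_+$ that dominate every lower bound in $V_+$) are defined analogously. $V_+$ is a lattice if every pair of elements of $V_+$ has a least upper bound and a greatest lower bound in $V_+$. *)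

(* Defs.v *)
From Stdlib Require Import Reals.
Open Scope R_scope.

Record RVectorSpace := {
  vcar :> Type;
  vadd : vcar -> vcar -> vcar;
  vzero : vcar;
  vopp : vcar -> vcar;
  vscal : R -> vcar -> vcar;
  vadd_assoc : forall x y z, vadd x (vadd y z) = vadd (vadd x y) z;
  vadd_comm : forall x y, vadd x y = vadd y x;
  vadd_0 : forall x, vadd x vzero = x;
  vadd_opp : forall x, vadd x (vopp x) = vzero;
  vscal_assoc : forall a b x, vscal a (vscal b x) = vscal (a * b) x;
  vscal_1 : forall x, vscal 1 x = x;
  vscal_distr_l : forall a x y, vscal a (vadd x y) = vadd (vscal a x) (vscal a y);
  vscal_distr_r : forall a b x, vscal (a + b) x = vadd (vscal a x) (vscal b x)
}.

Arguments vadd {_}. Arguments vzero {_}. Arguments vopp {_}. Arguments vscal {_}.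

Definition vsub {X : RVectorSpace} (x y : X) : X := vadd x (vopp y).

(** * A normed linear subspace V of an ambient vector space X,
    given by a membership predicate and a norm (only meaningful on V). *)
Record NormedSubspace (X : RVectorSpace) := {
  ns_mem : X -> Prop;
  ns_norm : X -> R;
  ns_mem_0 : ns_mem vzero;
  ns_mem_add : forall x y, ns_mem x -> ns_mem y -> ns_mem (vadd x y);
  ns_mem_scal : forall a x, ns_mem x -> ns_mem (vscal a x);
  ns_norm_nonneg : forall x, ns_mem x -> 0 <= ns_norm x;
  ns_norm_eq0 : forall x, ns_mem x -> ns_norm x = 0 -> x = vzero;
  ns_norm_scal : forall a x, ns_mem x -> ns_norm (vscal a x) = Rabs a * ns_norm x;
  ns_norm_triangle : forall x y, ns_mem x -> ns_mem y ->
      ns_norm (vadd x y) <= ns_norm x + ns_norm y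
}.

Arguments ns_mem {_}. Arguments ns_norm {_}.

Section NormedNotions.
Context {X : RVectorSpace} (V : NormedSubspace X).

Definition ns_converges (u : nat -> X) (l : X) : Prop :=
  Un_cv (fun n => ns_norm V (vsub (u n) l)) 0.

Definition ns_cauchy (u : nat -> X) : Prop :=
  forall eps, eps > 0 -> exists N, forall n m, (n >= N)%nat -> (m >= N)%nat ->
    ns_norm V (vsub (u n) (u m)) < eps.

Definition is_banach : Prop :=
  forall u : nat -> X, (forall n, ns_mem V (u n)) -> ns_cauchy u ->
    exists l, ns_mem V l /\ ns_converges u l.

(** f is a bounded linear functional on V (element of V*; only its values
    on V matter) *)
Definition is_dual_elem (f : X -> R) : Prop :=
  (forall x y, ns_mem V x -> ns_mem V y -> f (vadd x y) = f x + f y) /\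
  (forall a x, ns_mem V x -> f (vscal a x) = a * f x) /\
  (exists M, forall x, ns_mem V x -> Rabs (f x) <= M * ns_norm V x).

(** Phi is an element of the bidual V**: a bounded linear functional on V*
    (well defined on V*, i.e. depending only on the restriction to V). *)
Definition is_bidual_elem (Phi : (X -> R) -> R) : Prop :=
  (forall f g, is_dual_elem f -> is_dual_elem g ->
     (forall x, ns_mem V x -> f x = g x) -> Phi f = Phi g) /\
  (forall f g, is_dual_elem f -> is_dual_elem g ->
     Phi (fun x => f x + g x) = Phi f + Phi g) /\
  (forall a f, is_dual_elem f -> Phi (fun x => a * f x) = a * Phi f) /\
  (exists C, forall f M, is_dual_elem f ->
     (forall x, ns_mem V x -> Rabs (f x) <= M * ns_norm V x) ->
     Rabs (Phi f) <= C * M).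

Definition is_reflexive : Prop :=
  forall Phi, is_bidual_elem Phi ->
    exists v, ns_mem V v /\ forall f, is_dual_elem f -> Phi f = f v.

Definition is_strictly_convex : Prop :=
  forall x y, ns_mem V x -> ns_mem V y -> ns_norm V x = 1 -> ns_norm V y = 1 ->
    x <> y -> ns_norm V (vscal (1/2) (vadd x y)) < 1.

End NormedNotions.

Record GradientSpace := {
  gVt : RVectorSpace;
  gWt : RVectorSpace;
  gV : NormedSubspace gVt;
  gW : NormedSubspace gWt;
  grel : gVt -> gWt -> Prop;
  grel_add : forall u g u' g', grel u g -> grel u' g' -> grel (vadd u u') (vadd g g');
  grel_scal : forall a u g, a > 0 -> grel u g -> grel (vscal a u) (vscal a g);
  gV_banach : is_banach gV;
  gV_reflexive : is_reflexive gV;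
  gW_banach : is_banach gW;
  gW_reflexive : is_reflexive gW;
  gW_strictly_convex : is_strictly_convex gW;
  grel_neg : forall u g, ns_mem gV u -> ns_mem gW g -> grel u g ->
    exists g', ns_mem gW g' /\ grel (vopp u) g';
  grel_closed : forall (u : nat -> gVt) (g : nat -> gWt) u0 g0,
    (forall n, ns_mem gV (u n)) -> (forall n, ns_mem gW (g n)) ->
    (forall n, grel (u n) (g n)) ->
    ns_mem gV u0 -> ns_mem gW g0 ->
    ns_converges gV u u0 -> ns_converges gW g g0 -> grel u0 g0
}.

Section Ordered.
Context (G : GradientSpace) (le : gVt G -> gVt G -> Prop).

Local Notation Vm := (ns_mem (gV G)).
Local Notation nrm := (ns_norm (gV G)).

Definition is_linear_preorder : Prop :=
  (forall a, le a a) /\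
  (forall a b c, le a b -> le b c -> le a c) /\
  (forall a b c, le b c -> le (vadd a b) (vadd a c)) /\
  (forall a b alpha, le a b -> 0 <= alpha -> le (vscal alpha a) (vscal alpha b)).

Definition is_preordered_gs : Prop :=
  is_linear_preorder /\
  forall (u : nat -> gVt G) (psi u0 : gVt G),
    (forall n, Vm (u n)) -> (forall n, le (u n) psi) ->
    Vm u0 -> ns_converges (gV G) u u0 -> le u0 psi.

Definition is_ordered_gs : Prop :=
  is_preordered_gs /\ is_strictly_convex (gV G) /\
  forall u v, Vm u -> Vm v -> le vzero u -> le u v -> nrm u <= nrm v.

Definition Vplus (v : gVt G) : Prop := Vm v /\ le vzero v.

Definition Omega (psi1 psi2 u : gVt G) : Prop := Vm u /\ le psi1 u /\ le psi2 u.

Definition Omega' (psi1 psi2 v : gVt G) : Prop :=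
  Vm v /\ le vzero v /\ le v psi1 /\ le v psi2.

Definition is_max (psi1 psi2 u : gVt G) : Prop :=
  Omega psi1 psi2 u /\ (forall w, Omega psi1 psi2 w -> nrm u <= nrm w) /\
  (forall w, Omega psi1 psi2 w -> (forall w', Omega psi1 psi2 w' -> nrm w <= nrm w') ->
     w = u).

Definition minimizes_dist (psi1 psi2 m v : gVt G) : Prop :=
  Omega' psi1 psi2 v /\
  forall w, Omega' psi1 psi2 w -> nrm (vsub m v) <= nrm (vsub m w).

Definition is_min (psi1 psi2 v : gVt G) : Prop :=
  exists m, is_max psi1 psi2 m /\ minimizes_dist psi1 psi2 m v /\
    (forall w, minimizes_dist psi1 psi2 m w -> w = v).

Definition is_Vplus_lub (psi1 psi2 v : gVt G) : Prop :=
  Vplus v /\ le psi1 v /\ le psi2 v /\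
  forall u, Vplus u -> le psi1 u -> le psi2 u -> le v u.

Definition is_Vplus_glb (psi1 psi2 v : gVt G) : Prop :=
  Vplus v /\ le v psi1 /\ le v psi2 /\
  forall u, Vplus u -> le u psi1 -> le u psi2 -> le u v.

Definition Vplus_lattice : Prop :=
  forall u1 u2, Vplus u1 -> Vplus u2 ->
    (exists v, is_Vplus_lub u1 u2 v) /\ (exists v, is_Vplus_glb u1 u2 v).

End Ordered.

(* Main.v *)
Require Import Defs.
From Stdlib Require Import Reals Lra Lia List ZArith Bool.
From mathcomp Require boolp classical_sets.
Open Scope R_scope.

Arguments vadd_assoc {_}. Arguments vadd_comm {_}. Arguments vadd_0 {_}. Arguments vadd_opp {_}.
Arguments vscal_assoc {_}. Arguments vscal_1 {_}. Arguments vscal_distr_l {_}. Arguments vscal_distr_r {_}.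

Section VA.
Context {X : RVectorSpace}.
Implicit Types x y z : X.

Lemma vadd_0l x : vadd vzero x = x.
Proof. rewrite vadd_comm; apply vadd_0. Qed.

Lemma vadd_cancel_l x y z : vadd x y = vadd x z -> y = z.
Proof.
intros H. rewrite <- (vadd_0l y), <- (vadd_0l z).
rewrite <- (vadd_opp x), (vadd_comm x (vopp x)), <- !vadd_assoc, H. reflexivity.
Qed.

Lemma vscal_0 x : vscal 0 x = vzero.
Proof.
apply (vadd_cancel_l (vscal 0 x)). rewrite <- vscal_distr_r, vadd_0. f_equal; ring.
Qed.

Lemma vscal_zero a : vscal a (@vzero X) = vzero.
Proof. rewrite <- (vscal_0 vzero), vscal_assoc. f_equal; ring. Qed.

Lemma vopp_scal x : vopp x = vscal (-1) x.
Proof.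
apply (vadd_cancel_l x). rewrite vadd_opp.
rewrite <- (vscal_1 x) at 1. rewrite <- vscal_distr_r.
replace (1 + -1) with 0 by ring. symmetry; apply vscal_0.
Qed.
End VA.

Inductive vexp := EVar (n : nat) | EZero | EAdd (a b : vexp) | EOpp (a : vexp)
  | EScal (r : R) (a : vexp) | ESub (a b : vexp).

Fixpoint vden {X : RVectorSpace} (l : list X) (e : vexp) : X :=
  match e with
  | EVar n => nth n l vzero
  | EZero => vzero
  | EAdd a b => vadd (vden l a) (vden l b)
  | EOpp a => vopp (vden l a)
  | EScal r a => vscal r (vden l a)
  | ESub a b => vsub (vden l a) (vden l b)
  end.

Fixpoint vcoef (e : vexp) (i : nat) : R :=
  match e with
  | EVar n => if Nat.eqb i n then 1 else 0
  | EZero => 0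
  | EAdd a b => vcoef a i + vcoef b i
  | EOpp a => - vcoef a i
  | EScal r a => r * vcoef a i
  | ESub a b => vcoef a i - vcoef b i
  end.

Fixpoint nfden {X : RVectorSpace} (l : list X) (c : nat -> R) : X :=
  match l with
  | nil => vzero
  | x :: l' => vadd (vscal (c O) x) (nfden l' (fun i => c (S i)))
  end.

Section NF.
Context {X : RVectorSpace}.

Lemma nfden_ext (l : list X) c1 c2 : (forall i, (i < length l)%nat -> c1 i = c2 i) ->
  nfden l c1 = nfden l c2.
Proof.
revert c1 c2; induction l as [|x l IH]; intros c1 c2 H; simpl; auto.
rewrite (H O) by (simpl; lia). f_equal. apply IH. intros i Hi; apply H; simpl; lia.
Qed.

Lemma nfden_add (l : list X) c1 c2 :
  nfden l (fun i => c1 i + c2 i) = vadd (nfden l c1) (nfden l c2).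
Proof.
revert c1 c2; induction l as [|x l IH]; intros c1 c2; simpl.
- symmetry; apply vadd_0.
- rewrite IH, vscal_distr_r.
  rewrite <- !vadd_assoc. f_equal.
  rewrite !vadd_assoc. f_equal. apply vadd_comm.
Qed.

Lemma nfden_scal (l : list X) r c :
  nfden l (fun i => r * c i) = vscal r (nfden l c).
Proof.
revert c; induction l as [|x l IH]; intros c; simpl.
- symmetry; apply vscal_zero.
- rewrite IH, vscal_distr_l, vscal_assoc. reflexivity.
Qed.

Lemma nfden_zero (l : list X) : nfden l (fun _ => 0) = vzero.
Proof.
induction l as [|x l IH]; simpl; auto. rewrite IH, vscal_0. apply vadd_0.
Qed.

Lemma nfden_var (l : list X) n :
  nfden l (fun i => if Nat.eqb i n then 1 else 0) = nth n l vzero.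
Proof.
revert n; induction l as [|x l IH]; intros n; simpl.
- destruct n; reflexivity.
- destruct n as [|n].
  + simpl. rewrite vscal_1, nfden_zero. apply vadd_0.
  + simpl. rewrite vscal_0, vadd_0l. apply IH.
Qed.

Lemma vden_nf (l : list X) e : vden l e = nfden l (vcoef e).
Proof.
induction e; simpl.
- symmetry; apply nfden_var.
- symmetry; apply nfden_zero.
- rewrite IHe1, IHe2, <- nfden_add. reflexivity.
- rewrite IHe, vopp_scal, <- nfden_scal. apply nfden_ext; intros; ring.
- rewrite IHe, <- nfden_scal. reflexivity.
- unfold vsub. rewrite IHe1, IHe2, vopp_scal, <- nfden_scal, <- nfden_add.
  apply nfden_ext; intros; ring.
Qed.

Lemma vden_eq (l : list X) e1 e2 :
  (forall i, (i < length l)%nat -> vcoef e1 i = vcoef e2 i) -> vden l e1 = vden l e2.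
Proof. intros H; rewrite !vden_nf; apply nfden_ext; exact H. Qed.
End NF.

Ltac add_atom t l :=
  lazymatch l with
  | nil => constr:(cons t nil)
  | cons t _ => l
  | cons ?x ?l' => let l'' := add_atom t l' in constr:(cons x l'')
  end.

Ltac atoms t l :=
  lazymatch t with
  | vadd ?a ?b => let l1 := atoms a l in atoms b l1
  | vsub ?a ?b => let l1 := atoms a l in atoms b l1
  | vopp ?a => atoms a l
  | vscal _ ?a => atoms a l
  | vzero => l
  | _ => add_atom t l
  end.

Ltac find_atom t l :=
  lazymatch l with
  | cons t _ => constr:(O)
  | cons _ ?l' => let n := find_atom t l' in constr:(S n)
  end.

Ltac quote t l :=
  lazymatch t with
  | vadd ?a ?b => let qa := quote a l in let qb := quote b l in constr:(EAdd qa qb)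
  | vsub ?a ?b => let qa := quote a l in let qb := quote b l in constr:(ESub qa qb)
  | vopp ?a => let qa := quote a l in constr:(EOpp qa)
  | vscal ?r ?a => let qa := quote a l in constr:(EScal r qa)
  | vzero => constr:(EZero)
  | _ => let n := find_atom t l in constr:(EVar n)
  end.

Ltac coef_cases :=
  match goal with
  | H : (?i < O)%nat |- _ => exfalso; lia
  | H : (?i < S ?n)%nat |- _ =>
    destruct i as [|i]; [simpl; ring |
      let H' := fresh in assert (H' : (i < n)%nat) by lia; clear H; coef_cases]
  end.

Ltac vring :=
  lazymatch goal with
  | |- @eq ?T ?a ?b =>
    let l0 := atoms a (@nil T) in
    let l := atoms b l0 in
    let qa := quote a l in
    let qb := quote b l in
    change (vden l qa = vden l qb);
    apply vden_eq; simpl length; intros i Hi; coef_cases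
  end.

Section Test.
Context {X : RVectorSpace} (a b c : X) (t : R).
Goal vadd a (vsub b a) = vscal 1 b.
Proof. vring. Qed.
Goal vadd (vscal t a) (vscal (1 - t) a) = vadd a (vadd (vopp c) c).
Proof. vring. Qed.
End Test.

Ltac coef_cases_f :=
  match goal with
  | H : (?i < O)%nat |- _ => exfalso; lia
  | H : (?i < S ?n)%nat |- _ =>
    destruct i as [|i]; [simpl; first [ring | field; repeat split; intro; lra] |
      let H' := fresh in assert (H' : (i < n)%nat) by lia; clear H; coef_cases_f]
  end.

Ltac vfield :=
  lazymatch goal with
  | |- @eq ?T ?a ?b =>
    let l0 := atoms a (@nil T) in
    let l := atoms b l0 in
    let qa := quote a l in
    let qb := quote b l in
    change (vden l qa = vden l qb);
    apply vden_eq; simpl length; intros i Hi; coef_cases_f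
  end.

Section Test2.
Context {X : RVectorSpace} (a b c : X) (t s : R) (Ht : 0 < t + s).
Goal vscal (t + s) (vadd (vscal (t / (t + s)) a) (vscal (1 - t / (t+s)) b)) = vadd (vscal t a) (vscal s b).
Proof. vfield. Qed.
End Test2.

Definition Rsup (E : R -> Prop) : R :=
  match boolp.pselect (bound E /\ exists x, E x) with
  | left H => proj1_sig (completeness E (proj1 H) (proj2 H))
  | right _ => 0
  end.

Lemma Rsup_ub E x : (exists M, forall y, E y -> y <= M) -> E x -> x <= Rsup E.
Proof.
intros [M HM] Hx. unfold Rsup. destruct boolp.pselect as [H|H].
- destruct (completeness E _ _) as [m [Hm1 Hm2]]. simpl. apply Hm1; exact Hx.
- exfalso; apply H; split; [exists M; exact HM | exists x; exact Hx].
Qed.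

Lemma Rsup_le E M : (exists x, E x) -> (forall y, E y -> y <= M) -> Rsup E <= M.
Proof.
intros [x Hx] HM. unfold Rsup. destruct boolp.pselect as [H|H].
- destruct (completeness E _ _) as [m [Hm1 Hm2]]. simpl. apply Hm2; exact HM.
- exfalso; apply H; split; [exists M; exact HM | exists x; exact Hx].
Qed.

Definition Rinf (E : R -> Prop) : R := - Rsup (fun y => E (- y)).

Lemma Rinf_lb E x : (exists m, forall y, E y -> m <= y) -> E x -> Rinf E <= x.
Proof.
intros [m Hm] Hx. unfold Rinf.
assert (- x <= Rsup (fun y => E (- y))); [|lra].
apply Rsup_ub.
- exists (- m). intros y Hy. apply Hm in Hy. lra.
- rewrite Ropp_involutive; exact Hx.
Qed.

Lemma Rinf_ge E m : (exists x, E x) -> (forall y, E y -> m <= y) -> m <= Rinf E.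
Proof.
intros [x Hx] Hm. unfold Rinf.
assert (Rsup (fun y => E (- y)) <= - m); [|lra].
apply Rsup_le.
- exists (- x). rewrite Ropp_involutive; exact Hx.
- intros y Hy. apply Hm in Hy. lra.
Qed.

Lemma asb1 (P : Prop) : P -> boolp.asbool P = true.
Proof. exact (proj1 (Bool.reflect_iff _ _ (boolp.asboolP P))). Qed.
Lemma asb2 (P : Prop) : boolp.asbool P = true -> P.
Proof. exact (proj2 (Bool.reflect_iff _ _ (boolp.asboolP P))). Qed.
Lemma zorn_pre (T : Type) (t0 : T) (R : T -> T -> Prop) :
  (forall t, R t t) -> (forall r s t, R r s -> R s t -> R r t) ->
  (forall A : T -> Prop, (forall s t, A s -> A t -> R s t \/ R t s) ->
      exists t, forall s, A s -> R s t) ->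
  exists t, forall s, R t s -> R s t.
Proof.
intros Hr Ht Hc.
destruct (@classical_sets.ZL_preorder T t0 (fun s t => boolp.asbool (R s t))) as [t Ht'].
- intros t. apply asb1. apply Hr.
- intros r s t H1 H2. apply asb1.
  apply (Ht r s t); apply asb2; assumption.
- intros A HA. destruct (Hc A) as [t Hct].
  + intros s t Hs Htt. destruct (HA s t Hs Htt) as [H|H]; [left|right]; apply asb2; exact H.
  + exists t. intros s Hs. apply asb1. apply Hct; exact Hs.
- exists t. intros s Hs. apply asb2. apply Ht'. apply asb1. exact Hs.
Qed.

Lemma NNPP_b (P : Prop) : ~ ~ P -> P.
Proof. intros H. destruct (boolp.pselect P); tauto. Qed.

Section HB.
Context {X : RVectorSpace} (S : X -> Prop) (p : X -> R).
Hypothesis S0 : S vzero.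
Hypothesis Sadd : forall x y, S x -> S y -> S (vadd x y).
Hypothesis Sscal : forall a x, S x -> S (vscal a x).
Hypothesis psub : forall x y, S x -> S y -> p (vadd x y) <= p x + p y.
Hypothesis phom : forall a x, 0 < a -> S x -> p (vscal a x) <= a * p x.

Lemma phom_ge a x : 0 < a -> S x -> a * p x <= p (vscal a x).
Proof.
intros Ha Hx.
assert (H := phom (/ a) (vscal a x) (Rinv_0_lt_compat _ Ha) (Sscal a x Hx)).
rewrite vscal_assoc, Rinv_l, vscal_1 in H by lra.
apply (Rmult_le_compat_l a) in H; [|lra].
rewrite <- Rmult_assoc, Rinv_r, Rmult_1_l in H by lra. exact H.
Qed.

Lemma p0 : 0 <= p vzero.
Proof. assert (H := psub vzero vzero S0 S0). rewrite vadd_0 in H. lra. Qed.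

Definition good (q : (X -> Prop) * (X -> R)) : Prop :=
  let D := fst q in let g := snd q in
  (forall x, D x -> S x) /\ D vzero /\
  (forall x y, D x -> D y -> D (vadd x y)) /\ (forall a x, D x -> D (vscal a x)) /\
  (forall x y, D x -> D y -> g (vadd x y) = g x + g y) /\
  (forall a x, D x -> g (vscal a x) = a * g x) /\
  (forall x, D x -> g x <= p x).

Definition T := {q | good q}.
Definition Rl (t1 t2 : T) : Prop :=
  (forall x, fst (proj1_sig t1) x -> fst (proj1_sig t2) x) /\
  (forall x, fst (proj1_sig t1) x -> snd (proj1_sig t1) x = snd (proj1_sig t2) x).

Lemma good0 : good (fun x => x = vzero, fun _ => 0).
Proof.
repeat split; simpl.
- intros x ->; exact S0.
- intros x y -> ->; apply vadd_0.
- intros a x ->; apply vscal_zero.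
- intros; ring.
- intros; ring.
- intros x ->; apply p0.
Qed.

Lemma g_zero (t : T) : snd (proj1_sig t) vzero = 0.
Proof.
destruct t as [[D g] [H1 [H2 [H3 [H4 [H5 [H6 H7]]]]]]]; simpl in *.
assert (H := H6 0 vzero H2). rewrite vscal_0 in H. lra.
Qed.

Section Chain.
Variable A : T -> Prop.
Hypothesis Atot : forall s t, A s -> A t -> Rl s t \/ Rl t s.
Variable t1 : T.
Hypothesis At1 : A t1.

Definition UD (x : X) : Prop := exists t, A t /\ fst (proj1_sig t) x.
Definition Ug (x : X) : R :=
  match boolp.pselect (UD x) with
  | left H => snd (proj1_sig (proj1_sig (boolp.cid H))) x
  | right _ => 0
  end.

Lemma Ug_eq t x : A t -> fst (proj1_sig t) x -> Ug x = snd (proj1_sig t) x.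
Proof.
intros At Dx. unfold Ug. destruct boolp.pselect as [H|H].
- destruct (boolp.cid H) as [t' [At' Dx']]; simpl.
  destruct (Atot t t' At At') as [[_ E]|[_ E]].
  + symmetry; apply E; exact Dx.
  + apply E; exact Dx'.
- exfalso; apply H; exists t; auto.
Qed.

Lemma common x y : UD x -> UD y -> exists t, A t /\ fst (proj1_sig t) x /\ fst (proj1_sig t) y.
Proof.
intros [t [At Dx]] [t' [At' Dy]].
destruct (Atot t t' At At') as [[E _]|[E _]].
- exists t'; auto.
- exists t; auto.
Qed.

Lemma goodU : good (UD, Ug).
Proof.
repeat split; simpl.
- intros x [t [_ Dx]]. destruct t as [q Hq]; apply (proj1 Hq); exact Dx.
- exists t1; split; auto. destruct t1 as [q Hq]; apply (proj1 (proj2 Hq)).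
- intros x y Hx Hy. destruct (common x y Hx Hy) as [t [At [Dx Dy]]].
  exists t; split; auto. destruct t as [q Hq]; apply (proj1 (proj2 (proj2 Hq))); auto.
- intros a x [t [At Dx]]. exists t; split; auto.
  destruct t as [q Hq]; apply (proj1 (proj2 (proj2 (proj2 Hq)))); auto.
- intros x y Hx Hy. destruct (common x y Hx Hy) as [t [At [Dx Dy]]].
  assert (Dxy : fst (proj1_sig t) (vadd x y)).
  { destruct t as [q Hq]; apply (proj1 (proj2 (proj2 Hq))); auto. }
  rewrite (Ug_eq t x), (Ug_eq t y), (Ug_eq t (vadd x y)); auto.
  destruct t as [q Hq]; apply (proj1 (proj2 (proj2 (proj2 (proj2 Hq))))); auto.
- intros a x [t [At Dx]].
  assert (Dax : fst (proj1_sig t) (vscal a x)).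
  { destruct t as [q Hq]; apply (proj1 (proj2 (proj2 (proj2 Hq)))); auto. }
  rewrite (Ug_eq t x), (Ug_eq t (vscal a x)); auto.
  destruct t as [q Hq]; apply (proj1 (proj2 (proj2 (proj2 (proj2 (proj2 Hq)))))); auto.
- intros x [t [At Dx]]. rewrite (Ug_eq t x); auto.
  destruct t as [q Hq]; apply (proj2 (proj2 (proj2 (proj2 (proj2 (proj2 Hq)))))); auto.
Qed.
End Chain.

Section Ext.
Variable D : X -> Prop.
Variable g : X -> R.
Hypothesis Hg : good (D, g).
Variable x0 : X.
Hypothesis Sx0 : S x0.
Hypothesis nDx0 : ~ D x0.

Let DS : forall x, D x -> S x := proj1 Hg.
Let D0 : D vzero := proj1 (proj2 Hg).
Let Dadd : forall x y, D x -> D y -> D (vadd x y) := proj1 (proj2 (proj2 Hg)).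
Let Dscal : forall a x, D x -> D (vscal a x) := proj1 (proj2 (proj2 (proj2 Hg))).
Let gadd : forall x y, D x -> D y -> g (vadd x y) = g x + g y :=
  proj1 (proj2 (proj2 (proj2 (proj2 Hg)))).
Let gscal : forall a x, D x -> g (vscal a x) = a * g x :=
  proj1 (proj2 (proj2 (proj2 (proj2 (proj2 Hg))))).
Let gp : forall x, D x -> g x <= p x := proj2 (proj2 (proj2 (proj2 (proj2 (proj2 Hg))))).

Lemma key_ineq y z : D y -> D z -> g y - p (vsub y x0) <= p (vadd z x0) - g z.
Proof.
intros Dy Dz.
assert (E : vadd y z = vadd (vsub y x0) (vadd z x0)) by vring.
assert (H1 := gp _ (Dadd _ _ Dy Dz)). rewrite gadd in H1 by auto.
rewrite E in H1.
assert (Sm : S (vsub y x0)).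
{ unfold vsub; rewrite vopp_scal. apply Sadd; auto. }
assert (H2 := psub _ _ Sm (Sadd _ _ (DS _ Dz) Sx0)). lra.
Qed.

Definition cc := Rsup (fun r => exists y, D y /\ r = g y - p (vsub y x0)).

Lemma cc_ge y : D y -> g y - p (vsub y x0) <= cc.
Proof.
intros Dy. apply Rsup_ub.
- exists (p (vadd vzero x0) - g vzero). intros r [y' [Dy' ->]]. apply key_ineq; auto.
- exists y; auto.
Qed.

Lemma cc_le z : D z -> cc <= p (vadd z x0) - g z.
Proof.
intros Dz. apply Rsup_le.
- exists (g vzero - p (vsub vzero x0)), vzero; auto.
- intros r [y [Dy ->]]. apply key_ineq; auto.
Qed.

Lemma uniq_rep y1 t1 y2 t2 : D y1 -> D y2 ->
  vadd y1 (vscal t1 x0) = vadd y2 (vscal t2 x0) -> y1 = y2 /\ t1 = t2.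
Proof.
intros D1 D2 E.
destruct (Req_dec t1 t2) as [Ht|Ht].
- subst t2. split; auto.
  apply (f_equal (fun w => vsub w (vscal t1 x0))) in E.
  replace y1 with (vsub (vadd y1 (vscal t1 x0)) (vscal t1 x0)) by vring.
  rewrite E; vring.
- exfalso; apply nDx0.
  replace x0 with (vscal (/ (t1 - t2)) (vsub (vadd y1 (vscal t1 x0)) (vadd y1 (vscal t2 x0)))).
  + rewrite E. apply Dscal. unfold vsub. rewrite vopp_scal.
    replace (vadd (vadd y2 (vscal t2 x0)) (vscal (-1) (vadd y1 (vscal t2 x0))))
      with (vadd y2 (vscal (-1) y1)) by vring.
    apply Dadd; auto.
  + transitivity (vscal (/ (t1 - t2) * (t1 - t2)) x0).
    * vring.
    * rewrite Rinv_l by lra. apply vscal_1.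
Qed.

Definition ED (w : X) : Prop := exists yt : X * R, D (fst yt) /\ w = vadd (fst yt) (vscal (snd yt) x0).
Definition Eg (w : X) : R :=
  match boolp.pselect (ED w) with
  | left H => let yt := proj1_sig (boolp.cid H) in g (fst yt) + snd yt * cc
  | right _ => 0
  end.

Lemma Eg_eq y t : D y -> Eg (vadd y (vscal t x0)) = g y + t * cc.
Proof.
intros Dy. unfold Eg. destruct boolp.pselect as [H|H].
- destruct (boolp.cid H) as [[y' t'] [Dy' E]]; simpl in *.
  destruct (uniq_rep y t y' t' Dy Dy' E) as [-> ->]. reflexivity.
- exfalso; apply H. exists (y, t); simpl; auto.
Qed.

Lemma Ebound y t : D y -> g y + t * cc <= p (vadd y (vscal t x0)).
Proof.
intros Dy.
destruct (Rtotal_order t 0) as [Hn|[Hz|Hp]].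
- assert (Hs : 0 < - t) by lra.
  assert (H := cc_ge (vscal (/ - t) y) (Dscal _ _ Dy)).
  rewrite gscal in H by auto.
  assert (S2 : S (vsub (vscal (/ - t) y) x0)).
  { unfold vsub; rewrite vopp_scal. apply Sadd; auto. }
  assert (H2 := phom_ge (- t) _ Hs S2).
  assert (Ev : vscal (- t) (vsub (vscal (/ - t) y) x0) = vadd y (vscal t x0)).
  { transitivity (vadd (vscal (- t * / - t) y) (vscal t x0)); [vring|].
    rewrite Rinv_r, vscal_1 by lra; reflexivity. }
  rewrite Ev in H2.
  apply (Rmult_le_compat_l (- t)) in H; [|lra].
  replace (- t * (/ - t * g y - p (vsub (vscal (/ - t) y) x0))) with
    (g y - (- t) * p (vsub (vscal (/ - t) y) x0)) in H by (field; lra).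
  lra.
- subst t. rewrite vscal_0, vadd_0. assert (H := gp y Dy). lra.
- assert (H := cc_le (vscal (/ t) y) (Dscal _ _ Dy)).
  rewrite gscal in H by auto.
  assert (S2 : S (vadd (vscal (/ t) y) x0)).
  { apply Sadd; auto. }
  assert (H2 := phom_ge t _ Hp S2).
  assert (Ev : vscal t (vadd (vscal (/ t) y) x0) = vadd y (vscal t x0)).
  { transitivity (vadd (vscal (t * / t) y) (vscal t x0)); [vring|].
    rewrite Rinv_r, vscal_1 by lra; reflexivity. }
  rewrite Ev in H2.
  apply (Rmult_le_compat_l t) in H; [|lra].
  replace (t * (p (vadd (vscal (/ t) y) x0) - / t * g y)) with
    (t * p (vadd (vscal (/ t) y) x0) - g y) in H by (field; lra).
  lra.
Qed.

Lemma goodE : good (ED, Eg).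
Proof.
repeat split; simpl.
- intros w [[y t] [Dy ->]]; simpl in *. apply Sadd; auto.
- exists (vzero, 0); simpl; split; auto. rewrite vscal_0, vadd_0; reflexivity.
- intros w1 w2 [[y1 t1] [D1 ->]] [[y2 t2] [D2 ->]]; simpl in *.
  exists (vadd y1 y2, t1 + t2); simpl; split; auto. vring.
- intros a w [[y t] [Dy ->]]; simpl in *.
  exists (vscal a y, a * t); simpl; split; auto. vring.
- intros w1 w2 [[y1 t1] [D1 ->]] [[y2 t2] [D2 ->]]; simpl in *.
  replace (vadd (vadd y1 (vscal t1 x0)) (vadd y2 (vscal t2 x0)))
    with (vadd (vadd y1 y2) (vscal (t1 + t2) x0)) by vring.
  rewrite !Eg_eq, gadd by auto. ring.
- intros a w [[y t] [Dy ->]]; simpl in *.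
  replace (vscal a (vadd y (vscal t x0))) with (vadd (vscal a y) (vscal (a * t) x0)) by vring.
  rewrite !Eg_eq, gscal by auto. ring.
- intros w [[y t] [Dy ->]]; simpl in *. rewrite Eg_eq by auto. apply Ebound; auto.
Qed.

Lemma ext_incl x : D x -> ED x /\ Eg x = g x.
Proof.
intros Dx. assert (E : x = vadd x (vscal 0 x0)) by (rewrite vscal_0, vadd_0; auto).
split.
- exists (x, 0); simpl; auto.
- rewrite E at 1. rewrite Eg_eq by auto. ring.
Qed.

Lemma ext_x0 : ED x0.
Proof. exists (vzero, 1); simpl; split; auto. vring. Qed.
End Ext.

Theorem hahn_banach : exists f : X -> R,
  (forall x y, S x -> S y -> f (vadd x y) = f x + f y) /\
  (forall a x, S x -> f (vscal a x) = a * f x) /\ (forall x, S x -> f x <= p x).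
Proof.
destruct (zorn_pre T (exist _ _ good0) Rl) as [[[D g] Hg] Hmax].
- intros t; split; auto.
- intros r s t [A1 B1] [A2 B2]; split; auto.
  intros x Hx. rewrite B1 by auto. apply B2; auto.
- intros A Atot. destruct (boolp.pselect (exists t, A t)) as [[t1 At1]|HA].
  + exists (exist _ _ (goodU A Atot t1 At1)). intros s As; split; simpl.
    * intros x Hx; exists s; auto.
    * intros x Hx. symmetry; apply Ug_eq; auto.
  + exists (exist _ _ good0). intros s As; exfalso; apply HA; exists s; auto.
- simpl in *.
  assert (DS : forall x, S x -> D x).
  { intros x0 Sx0. apply NNPP_b. intros nD.
    assert (H := Hmax (exist _ _ (goodE D g Hg x0 Sx0 nD))).
    destruct H as [H _].
    + split; simpl; intros x Hx; edestruct ext_incl as [E1 E2]; eauto.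
    + apply nD. apply H. simpl. eapply ext_x0; eauto. }
  exists g. destruct Hg as [H1 [H2 [H3 [H4 [H5 [H6 H7]]]]]]; simpl in *.
  repeat split; auto.
Qed.
End HB.

Arguments vadd_assoc {_}. Arguments vadd_comm {_}. Arguments vadd_0 {_}. Arguments vadd_opp {_}.
Arguments vscal_assoc {_}. Arguments vscal_1 {_}. Arguments vscal_distr_l {_}. Arguments vscal_distr_r {_}.
Arguments ns_mem_0 {_}. Arguments ns_mem_add {_}. Arguments ns_mem_scal {_}.
Arguments ns_norm_nonneg {_}. Arguments ns_norm_eq0 {_}. Arguments ns_norm_scal {_}.
Arguments ns_norm_triangle {_}.

Section Norm.
Context {X : RVectorSpace} (V : NormedSubspace X).
Local Notation Vm := (ns_mem V).
Local Notation nrm := (ns_norm V).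

Lemma nrm0 : nrm vzero = 0.
Proof.
rewrite <- (vscal_0 (@vzero X)), ns_norm_scal by apply ns_mem_0.
rewrite Rabs_R0; ring.
Qed.

Lemma Vm_opp x : Vm x -> Vm (vopp x).
Proof. intros; rewrite vopp_scal; apply ns_mem_scal; auto. Qed.

Lemma Vm_sub x y : Vm x -> Vm y -> Vm (vsub x y).
Proof. intros; unfold vsub; apply ns_mem_add; auto; apply Vm_opp; auto. Qed.

Lemma nrm_opp x : Vm x -> nrm (vopp x) = nrm x.
Proof.
intros; rewrite vopp_scal, ns_norm_scal by auto.
rewrite Rabs_left by lra; ring.
Qed.

Lemma nrm_sub_sym x y : Vm x -> Vm y -> nrm (vsub x y) = nrm (vsub y x).
Proof.
intros. replace (vsub x y) with (vopp (vsub y x)) by vring.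
apply nrm_opp, Vm_sub; auto.
Qed.

Lemma nrm_sub_le x y : Vm x -> Vm y -> nrm x <= nrm (vsub x y) + nrm y.
Proof.
intros. replace x with (vadd (vsub x y) y) at 1 by vring.
apply ns_norm_triangle; auto. apply Vm_sub; auto.
Qed.

Lemma nrm_scal_pos a x : 0 <= a -> Vm x -> nrm (vscal a x) = a * nrm x.
Proof. intros; rewrite ns_norm_scal, Rabs_pos_eq; auto. Qed.

Definition convex (C : X -> Prop) : Prop :=
  forall x y l, C x -> C y -> 0 <= l <= 1 -> C (vadd (vscal l x) (vscal (1 - l) y)).

Definition closedV (C : X -> Prop) : Prop :=
  forall (u : nat -> X) u0, (forall n, C (u n)) -> Vm u0 -> ns_converges V u u0 -> C u0.

Lemma conv_inv (e : R) : 0 < e -> exists N : nat, / (INR N + 1) < e.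
Proof.
intros He. destruct (archimed (/ e)) as [H1 _].
assert (Hz : (0 <= up (/ e))%Z).
{ apply le_IZR. assert (0 < / e) by (apply Rinv_0_lt_compat; lra). lra. }
exists (Z.to_nat (up (/ e))).
rewrite INR_IZR_INZ, Z2Nat.id by exact Hz.
assert (0 < / e) by (apply Rinv_0_lt_compat; lra).
replace e with (/ / e) at 2 by (field; lra).
apply Rinv_lt_contravar; nra.
Qed.

Lemma inv_mono (n N : nat) : (n >= N)%nat -> / (INR n + 1) <= / (INR N + 1).
Proof.
intros H. apply Rinv_le_contravar.
- pose proof (pos_INR N); lra.
- apply le_INR in H; lra.
Qed.

Lemma inv_pos (n : nat) : 0 < / (INR n + 1).
Proof. apply Rinv_0_lt_compat; pose proof (pos_INR n); lra. Qed.

Lemma cv_of_bound (u : nat -> X) l :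
  (forall n, nrm (vsub (u n) l) <= / (INR n + 1)) -> (forall n, Vm (vsub (u n) l)) ->
  ns_converges V u l.
Proof.
intros H Hm e He. destruct (conv_inv e He) as [N HN]. exists N.
intros n Hn. unfold R_dist. rewrite Rminus_0_r, Rabs_pos_eq by (apply ns_norm_nonneg; auto).
eapply Rle_lt_trans; [apply H|]. eapply Rle_lt_trans; [apply inv_mono; exact Hn|exact HN].
Qed.

Section Sep.
Variable C : X -> Prop.
Hypothesis CV : forall c, C c -> Vm c.
Hypothesis Cconv : convex C.
Hypothesis Cclosed : closedV C.
Variable v : X.
Hypothesis Vv : Vm v.
Hypothesis nCv : ~ C v.

Lemma sep_dist : exists d, 0 < d /\ forall c, C c -> d <= nrm (vsub v c).
Proof.
apply NNPP_b. intros Hn.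
assert (H : forall n : nat, exists c, C c /\ nrm (vsub v c) <= / (INR n + 1)).
{ intros n. apply NNPP_b. intros Hc. apply Hn. exists (/ (INR n + 1)). split; [apply inv_pos|].
  intros c Cc. apply Rnot_lt_le. intros Hl. apply Hc. exists c; split; auto; lra. }
pose (u := fun n => proj1_sig (boolp.cid (H n))).
assert (Cu : forall n, C (u n)) by (intros n; exact (proj1 (proj2_sig (boolp.cid (H n))))).
apply nCv. apply (Cclosed u v Cu Vv). apply cv_of_bound.
- intros n. rewrite nrm_sub_sym by auto. exact (proj2 (proj2_sig (boolp.cid (H n)))).
- intros n. apply Vm_sub; auto.
Qed.

Variable dl : R.
Hypothesis dl_pos : 0 < dl.
Hypothesis dl_le : forall c, C c -> dl <= nrm (vsub v c).

Definition Ex (x : X) (r : R) : Prop :=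
  r = nrm x \/ exists t c, 0 <= t /\ C c /\ r = nrm (vadd x (vscal t (vsub v c))) - t * dl.

Lemma Ex_lb x : Vm x -> forall r, Ex x r -> - nrm x <= r.
Proof.
intros Vx r [Hr|[t [c [Ht [Cc Hr]]]]]; subst r.
- pose proof (ns_norm_nonneg V x Vx); lra.
- assert (Vc := CV c Cc).
  assert (Vd : Vm (vsub v c)) by (apply Vm_sub; auto).
  assert (H1 := nrm_sub_le (vscal t (vsub v c)) (vopp x) (ns_mem_scal V _ _ Vd) (Vm_opp x Vx)).
  replace (vsub (vscal t (vsub v c)) (vopp x)) with (vadd x (vscal t (vsub v c))) in H1 by vring.
  rewrite nrm_scal_pos, nrm_opp in H1 by auto.
  assert (H2 := dl_le c Cc). nra.
Qed.

Definition pp (x : X) : R := Rinf (Ex x).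

Lemma pp_lb x r : Vm x -> Ex x r -> pp x <= r.
Proof. intros Vx H. apply Rinf_lb; auto. exists (- nrm x). apply Ex_lb; auto. Qed.

Lemma pp_ge x m : (forall r, Ex x r -> m <= r) -> m <= pp x.
Proof. intros H. apply Rinf_ge; auto. exists (nrm x); left; auto. Qed.

Lemma pp_sub x y : Vm x -> Vm y -> pp (vadd x y) <= pp x + pp y.
Proof.
intros Vx Vy.
assert (Vxy : Vm (vadd x y)) by (apply ns_mem_add; auto).
assert (Vdc : forall c t, C c -> Vm (vscal t (vsub v c))).
{ intros c t Cc; apply ns_mem_scal, Vm_sub; auto. }
assert (K : forall r1 r2, Ex x r1 -> Ex y r2 -> pp (vadd x y) <= r1 + r2).
{ intros r1 r2 [H1|[t1 [c1 [Ht1 [C1 H1]]]]] [H2|[t2 [c2 [Ht2 [C2 H2]]]]]; subst r1 r2.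
  - eapply Rle_trans; [apply pp_lb; [auto| left; reflexivity] | apply ns_norm_triangle; auto].
  - eapply Rle_trans; [apply pp_lb; [auto| right; exists t2, c2; repeat split; auto] |].
    replace (vadd (vadd x y) (vscal t2 (vsub v c2))) with (vadd x (vadd y (vscal t2 (vsub v c2)))) by vring.
    pose proof (ns_norm_triangle V x (vadd y (vscal t2 (vsub v c2))) Vx (ns_mem_add V _ _ Vy (Vdc c2 t2 C2))).
    lra.
  - eapply Rle_trans; [apply pp_lb; [auto| right; exists t1, c1; repeat split; auto] |].
    replace (vadd (vadd x y) (vscal t1 (vsub v c1))) with (vadd (vadd x (vscal t1 (vsub v c1))) y) by vring.
    pose proof (ns_norm_triangle V (vadd x (vscal t1 (vsub v c1))) y (ns_mem_add V _ _ Vx (Vdc c1 t1 C1)) Vy).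
    lra.
  - pose proof (ns_norm_triangle V _ _ (ns_mem_add V _ _ Vx (Vdc c1 t1 C1)) (ns_mem_add V _ _ Vy (Vdc c2 t2 C2))).
    destruct (Req_dec (t1 + t2) 0) as [Hz|Hz].
    + assert (t1 = 0) by lra. assert (t2 = 0) by lra. subst t1 t2.
      rewrite !vscal_0, !vadd_0 in *.
      eapply Rle_trans; [apply pp_lb; [auto| left; reflexivity] |]. lra.
    + set (l := t1 / (t1 + t2)).
      assert (Hl : 0 <= l <= 1).
      { unfold l; split.
        - apply Rmult_le_pos; auto. apply Rlt_le, Rinv_0_lt_compat; lra.
        - apply Rmult_le_reg_r with (t1 + t2); [lra|]. unfold Rdiv. rewrite Rmult_assoc, Rinv_l; lra. }
      assert (Cc := Cconv c1 c2 l C1 C2 Hl).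
      eapply Rle_trans; [apply pp_lb; [auto| right; exists (t1 + t2), (vadd (vscal l c1) (vscal (1 - l) c2)); repeat split; auto; lra] |].
      replace (vadd (vadd x y) (vscal (t1 + t2) (vsub v (vadd (vscal l c1) (vscal (1 - l) c2)))))
        with (vadd (vadd x (vscal t1 (vsub v c1))) (vadd y (vscal t2 (vsub v c2)))).
      * lra.
      * unfold l. assert (0 < t1 + t2) by lra. vfield. }
assert (K2 : forall r2, Ex y r2 -> pp (vadd x y) - r2 <= pp x).
{ intros r2 H2. apply pp_ge. intros r1 H1. pose proof (K r1 r2 H1 H2). lra. }
assert (pp (vadd x y) - pp x <= pp y); [|lra].
apply pp_ge. intros r2 H2. pose proof (K2 r2 H2). lra.
Qed.

Lemma pp_hom a x : 0 < a -> Vm x -> pp (vscal a x) <= a * pp x.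
Proof.
intros Ha Vx.
assert (Vax : Vm (vscal a x)) by (apply ns_mem_scal; auto).
assert (K : forall r, Ex x r -> pp (vscal a x) <= a * r).
{ intros r [H|[t [c [Ht [Cc H]]]]]; subst r.
  - apply pp_lb; auto. left. symmetry; apply nrm_scal_pos; auto; lra.
  - apply pp_lb; auto. right. exists (a * t), c. repeat split; auto.
    + apply Rmult_le_pos; lra.
    + replace (vadd (vscal a x) (vscal (a * t) (vsub v c))) with (vscal a (vadd x (vscal t (vsub v c)))) by vring.
      rewrite nrm_scal_pos; [ring|lra|]. apply ns_mem_add; auto. apply ns_mem_scal, Vm_sub; auto. }
assert (/ a * pp (vscal a x) <= pp x).
{ apply pp_ge. intros r Hr. pose proof (K r Hr).
  apply Rmult_le_reg_l with a; auto. rewrite <- Rmult_assoc, Rinv_r, Rmult_1_l; lra. }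
apply Rmult_le_compat_l with (r := a) in H; [|lra].
rewrite <- Rmult_assoc, Rinv_r, Rmult_1_l in H; lra.
Qed.

Lemma pp_le_nrm x : Vm x -> pp x <= nrm x.
Proof. intros; apply pp_lb; auto; left; auto. Qed.
End Sep.

Theorem separation (C : X -> Prop) v :
  (forall c, C c -> Vm c) -> convex C -> closedV C -> Vm v -> ~ C v ->
  exists f, is_dual_elem V f /\ exists d, 0 < d /\ forall c, C c -> f c + d <= f v.
Proof.
intros CV Cconv Ccl Vv nCv.
edestruct sep_dist as [dl [Hd Hdl]]; eauto.
edestruct (hahn_banach (ns_mem V) (pp C v dl)) as [f [fadd [fscal fle]]].
- apply ns_mem_0.
- apply ns_mem_add.
- apply ns_mem_scal.
- intros; eapply pp_sub; eauto.
- intros; eapply pp_hom; eauto.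
- exists f. split.
  + split; [exact fadd|split; [exact fscal|]].
    exists 1. intros x Vx. rewrite Rmult_1_l. apply Rabs_le. split.
    * assert (H := fle (vscal (-1) x) (ns_mem_scal V _ _ Vx)).
      rewrite fscal in H by auto.
      assert (H2 : pp C v dl (vscal (-1) x) <= nrm (vscal (-1) x)) by (eapply pp_le_nrm; eauto; apply ns_mem_scal; auto).
      rewrite <- vopp_scal, nrm_opp in H2 by auto. rewrite <- vopp_scal in H. lra.
    * eapply Rle_trans; [apply fle; auto|]. eapply pp_le_nrm; eauto.
  + exists dl; split; auto. intros c Cc.
    assert (Vc := CV c Cc).
    assert (H := fle (vsub c v) (Vm_sub c v Vc Vv)).
    assert (E : f (vsub c v) = f c - f v).
    { unfold vsub. rewrite fadd by (auto; apply Vm_opp; auto). rewrite vopp_scal, fscal by auto. ring. }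
    rewrite E in H.
    assert (H2 : pp C v dl (vsub c v) <= - dl).
    { eapply Rle_trans; [apply pp_lb; eauto; [apply Vm_sub; auto| right; exists 1, c; repeat split; auto; lra]|].
      replace (vadd (vsub c v) (vscal 1 (vsub v c))) with (@vzero X) by vring.
      rewrite nrm0; lra. }
    lra.
Qed.
End Norm.

Arguments vadd_assoc {_}. Arguments vadd_comm {_}. Arguments vadd_0 {_}. Arguments vadd_opp {_}.
Arguments vscal_assoc {_}. Arguments vscal_1 {_}. Arguments vscal_distr_l {_}. Arguments vscal_distr_r {_}.
Arguments ns_mem_0 {_}. Arguments ns_mem_add {_}. Arguments ns_mem_scal {_}.
Arguments ns_norm_nonneg {_}. Arguments ns_norm_eq0 {_}. Arguments ns_norm_scal {_}.
Arguments ns_norm_triangle {_}.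

Lemma fext {A : Type} (f g : A -> R) : (forall x, f x = g x) -> f = g.
Proof. intros H; apply boolp.functional_extensionality_dep; exact H. Qed.

Definition FS (A : Type) : RVectorSpace.
Proof.
refine (@Build_RVectorSpace (A -> R) (fun f g x => f x + g x) (fun _ => 0)
  (fun f x => - f x) (fun a f x => a * f x) _ _ _ _ _ _ _ _);
  intros; apply fext; intros; ring.
Defined.

Lemma abs_bounds x M : Rabs x <= M -> - M <= x <= M.
Proof. unfold Rabs; destruct Rcase_abs; intros; lra. Qed.

Section Exist.
Context {X : RVectorSpace} (V : NormedSubspace X).
Hypothesis Vrefl : is_reflexive V.
Local Notation Vm := (ns_mem V).
Local Notation nrm := (ns_norm V).

Variable K : X -> Prop.
Hypothesis KV : forall c, K c -> Vm c.
Hypothesis Kconv : convex K.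
Hypothesis Kcl : closedV V K.
Variable k0 : X.
Hypothesis Kk0 : K k0.

Definition dK := Rinf (fun r => exists w, K w /\ r = nrm w).

Lemma dK_le w : K w -> dK <= nrm w.
Proof.
intros Kw. apply Rinf_lb.
- exists 0. intros y [w' [Kw' ->]]. apply ns_norm_nonneg; auto.
- exists w; auto.
Qed.

Lemma dK_ge0 : 0 <= dK.
Proof.
apply Rinf_ge.
- exists (nrm k0); exists k0; auto.
- intros y [w' [Kw' ->]]. apply ns_norm_nonneg; auto.
Qed.

Lemma dK_approx (n : nat) : exists w, K w /\ nrm w <= dK + / (INR n + 1).
Proof.
apply NNPP_b. intros H.
assert (dK + / (INR n + 1) <= dK); [|pose proof (inv_pos n); lra].
apply Rinf_ge.
- exists (nrm k0); exists k0; auto.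
- intros y [w [Kw ->]]. apply Rnot_lt_le. intros Hl. apply H. exists w; split; auto; lra.
Qed.

Definition xs (n : nat) : X := proj1_sig (boolp.cid (dK_approx n)).
Lemma xs_K n : K (xs n).
Proof. exact (proj1 (proj2_sig (boolp.cid (dK_approx n)))). Qed.
Lemma xs_nrm n : nrm (xs n) <= dK + / (INR n + 1).
Proof. exact (proj2 (proj2_sig (boolp.cid (dK_approx n)))). Qed.
Lemma xs_V n : Vm (xs n).
Proof. apply KV, xs_K. Qed.

Definition Bd := dK + 1.
Lemma xs_B n : nrm (xs n) <= Bd.
Proof.
pose proof (xs_nrm n). unfold Bd.
assert (/ (INR n + 1) <= 1); [|lra].
replace 1 with (/ (INR 0 + 1)) at 2 by (simpl; field). apply inv_mono; lia.
Qed.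

Definition Ef (f : X -> R) (r : R) : Prop := exists N, forall n, (n >= N)%nat -> f (xs n) <= r.
Definition pf (f : X -> R) : R := Rinf (Ef f).

Lemma dual_bound f : is_dual_elem V f -> exists M, 0 <= M /\ forall n, Rabs (f (xs n)) <= M.
Proof.
intros [_ [_ [M HM]]]. exists (Rabs M * Bd). split.
- apply Rmult_le_pos; [apply Rabs_pos|]. unfold Bd; pose proof dK_ge0; lra.
- intros n. eapply Rle_trans; [apply HM, xs_V|].
  pose proof (xs_B n). pose proof (ns_norm_nonneg V _ (xs_V n)).
  pose proof (Rle_abs M). pose proof (Rabs_pos M).
  apply Rle_trans with (Rabs M * nrm (xs n)); [nra|]. apply Rmult_le_compat_l; auto.
Qed.

Lemma pf_lb f r : is_dual_elem V f -> Ef f r -> pf f <= r.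
Proof.
intros Hf Hr. apply Rinf_lb; auto.
destruct (dual_bound f Hf) as [M [HM0 HM]].
exists (- M). intros y [N HN]. pose proof (HN N (le_n _)). pose proof (HM N).
apply abs_bounds in H0. lra.
Qed.

Lemma pf_ge f m : is_dual_elem V f -> (forall r, Ef f r -> m <= r) -> m <= pf f.
Proof.
intros Hf H. apply Rinf_ge; auto.
destruct (dual_bound f Hf) as [M [HM0 HM]].
exists M, O. intros n _. apply abs_bounds, HM.
Qed.

Lemma dual0 : is_dual_elem V (fun _ => 0).
Proof.
split; [intros; ring|split; [intros; ring|]]. exists 0. intros. rewrite Rabs_R0; lra.
Qed.

Lemma dual_add f g : is_dual_elem V f -> is_dual_elem V g -> is_dual_elem V (fun x => f x + g x).
Proof.
intros [fa [fs [M1 H1]]] [ga [gs [M2 H2]]]. split; [|split].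
- intros x y Hx Hy. rewrite fa, ga by auto. ring.
- intros a x Hx. rewrite fs, gs by auto. ring.
- exists (M1 + M2). intros x Hx. eapply Rle_trans; [apply Rabs_triang|].
  pose proof (H1 x Hx); pose proof (H2 x Hx). lra.
Qed.

Lemma dual_scal a f : is_dual_elem V f -> is_dual_elem V (fun x => a * f x).
Proof.
intros [fa [fs [M1 H1]]]. split; [|split].
- intros x y Hx Hy. rewrite fa by auto. ring.
- intros b x Hx. rewrite fs by auto. ring.
- exists (Rabs a * M1). intros x Hx. rewrite Rabs_mult, Rmult_assoc.
  apply Rmult_le_compat_l; [apply Rabs_pos|auto].
Qed.

Lemma pf_sub f g : is_dual_elem V f -> is_dual_elem V g ->
  pf (fun x => f x + g x) <= pf f + pf g.
Proof.
intros Hf Hg.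
assert (Hfg := dual_add f g Hf Hg).
assert (K1 : forall r1 r2, Ef f r1 -> Ef g r2 -> pf (fun x => f x + g x) <= r1 + r2).
{ intros r1 r2 [N1 H1] [N2 H2]. apply pf_lb; auto. exists (max N1 N2).
  intros n Hn. pose proof (H1 n ltac:(lia)). pose proof (H2 n ltac:(lia)). lra. }
assert (K2 : forall r2, Ef g r2 -> pf (fun x => f x + g x) - r2 <= pf f).
{ intros r2 H2. apply pf_ge; auto. intros r1 H1. pose proof (K1 r1 r2 H1 H2). lra. }
assert (pf (fun x => f x + g x) - pf f <= pf g); [|lra].
apply pf_ge; auto. intros r2 H2. pose proof (K2 r2 H2). lra.
Qed.

Lemma pf_hom a f : 0 < a -> is_dual_elem V f -> pf (fun x => a * f x) <= a * pf f.
Proof.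
intros Ha Hf.
assert (Haf := dual_scal a f Hf).
assert (K1 : forall r, Ef f r -> pf (fun x => a * f x) <= a * r).
{ intros r [N H]. apply pf_lb; auto. exists N. intros n Hn.
  apply Rmult_le_compat_l; [lra|auto]. }
assert (/ a * pf (fun x => a * f x) <= pf f).
{ apply pf_ge; auto. intros r Hr. pose proof (K1 r Hr).
  apply Rmult_le_reg_l with a; auto. rewrite <- Rmult_assoc, Rinv_r, Rmult_1_l; lra. }
apply Rmult_le_compat_l with (r := a) in H; [|lra].
rewrite <- Rmult_assoc, Rinv_r, Rmult_1_l in H; lra.
Qed.

Lemma pf_ev f c : is_dual_elem V f -> (forall n, f (xs n) <= c) -> pf f <= c.
Proof. intros Hf H. apply pf_lb; auto. exists O; auto. Qed.

Lemma weak_point : exists v, Vm v /\ forall f, is_dual_elem V f -> f v <= pf f.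
Proof.
edestruct (hahn_banach (X := FS X) (is_dual_elem V) pf) as [Phi [Padd [Pscal Ple]]].
- exact dual0.
- intros f g Hf Hg; exact (dual_add f g Hf Hg).
- intros a f Hf; exact (dual_scal a f Hf).
- intros f g Hf Hg; exact (pf_sub f g Hf Hg).
- intros a f Ha Hf; exact (pf_hom a f Ha Hf).
- simpl in Padd, Pscal.
  assert (Pwd : forall f g, is_dual_elem V f -> is_dual_elem V g ->
     (forall x, Vm x -> f x = g x) -> Phi f = Phi g).
  { intros f g Hf Hg Hfg.
    assert (Hd := dual_add f _ Hf (dual_scal (-1) g Hg)).
    assert (E : Phi (fun x => f x + -1 * g x) = Phi f - Phi g).
    { rewrite Padd, Pscal by (auto; apply dual_scal; auto). ring. }
    assert (Hd' := dual_add g _ Hg (dual_scal (-1) f Hf)).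
    assert (E' : Phi (fun x => g x + -1 * f x) = Phi g - Phi f).
    { rewrite Padd, Pscal by (auto; apply dual_scal; auto). ring. }
    assert (H1 := Ple _ Hd). assert (H2 := Ple _ Hd').
    assert (pf (fun x => f x + -1 * g x) <= 0).
    { apply pf_ev; auto. intros n. rewrite (Hfg _ (xs_V n)). lra. }
    assert (pf (fun x => g x + -1 * f x) <= 0).
    { apply pf_ev; auto. intros n. rewrite (Hfg _ (xs_V n)). lra. }
    lra. }
  assert (Pbid : is_bidual_elem V Phi).
  { split; [exact Pwd|split; [|split]].
    - intros f g Hf Hg. apply Padd; auto.
    - intros a f Hf. apply Pscal; auto.
    - destruct (boolp.pselect (exists x, Vm x /\ nrm x <> 0)) as [[x1 [Vx1 Nx1]]|Hno].
      + exists Bd. intros f M Hf HM.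
        assert (M0 : 0 <= M).
        { pose proof (HM x1 Vx1). pose proof (Rabs_pos (f x1)).
          pose proof (ns_norm_nonneg V x1 Vx1).
          destruct (Rle_lt_dec 0 M); auto. exfalso. nra. }
        assert (Hb : forall g, is_dual_elem V g -> (forall x, Vm x -> Rabs (g x) <= M * nrm x) -> Phi g <= Bd * M).
        { intros g Hg HgM. eapply Rle_trans; [apply Ple; auto|]. apply pf_ev; auto.
          intros n. eapply Rle_trans; [apply Rle_abs|]. eapply Rle_trans; [apply HgM, xs_V|].
          pose proof (xs_B n). nra. }
        apply Rabs_le. split.
        * assert (H := Hb _ (dual_scal (-1) f Hf)).
          rewrite Pscal in H by auto.
          assert (Phi f >= - (Bd * M)); [|lra]. apply Rle_ge.
          enough (- Phi f <= Bd * M) by lra. replace (- Phi f) with (-1 * Phi f) by ring. apply H.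
          intros x Hx. rewrite Rabs_mult. replace (Rabs (-1)) with 1 by (rewrite Rabs_left; lra). rewrite Rmult_1_l. apply HM; auto.
        * apply Hb; auto.
      + exists 0. intros f M Hf HM.
        assert (E : Phi f = Phi (fun _ => 0)).
        { apply Pwd; auto. apply dual0. intros x Hx.
          assert (x = vzero).
          { apply (ns_norm_eq0 V); auto. destruct (Req_dec (nrm x) 0); auto. exfalso; apply Hno; eauto. }
          subst x. destruct Hf as [_ [fs _]].
          rewrite <- (vscal_0 (@vzero X)), fs by apply ns_mem_0. ring. }
        assert (E0 : Phi (fun _ => 0) = 0).
        { assert (H := Pscal 0 (fun _ => 0) dual0). simpl in H.
          replace (fun _ : X => 0 * 0) with (fun _ : X => 0) in H by (apply fext; intros; ring).
          lra. }
        rewrite E, E0, Rabs_R0. lra. }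
  destruct (Vrefl Phi Pbid) as [v [Vv Hv]].
  exists v. split; auto. intros f Hf. rewrite <- Hv by auto. apply Ple; auto.
Qed.

Theorem min_exists : exists v, K v /\ forall w, K w -> nrm v <= nrm w.
Proof.
destruct weak_point as [v [Vv Hv]].
assert (Kv : K v).
{ apply NNPP_b. intros nK.
  destruct (separation V K v KV Kconv Kcl Vv nK) as [f [Hf [d [Hd Hfd]]]].
  assert (H1 := Hv f Hf).
  assert (H2 : pf f <= f v - d).
  { apply pf_ev; auto. intros n. pose proof (Hfd _ (xs_K n)). lra. }
  lra. }
exists v. split; auto.
assert (nrm v <= dK).
{ apply Rnot_lt_le. intros Hlt.
  set (r := (dK + nrm v) / 2).
  set (Bl := fun w => Vm w /\ nrm w <= r).
  assert (Bconv : convex Bl).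
  { intros x y l [Vx Hx] [Vy Hy] Hl. split.
    - apply ns_mem_add; apply ns_mem_scal; auto.
    - eapply Rle_trans; [apply ns_norm_triangle; apply ns_mem_scal; auto|].
      rewrite !nrm_scal_pos by (auto; lra). nra. }
  assert (Bcl : closedV V Bl).
  { intros u u0 Hu Vu0 Hcv. split; auto.
    apply Rnot_lt_le. intros Hl.
    destruct (Hcv (nrm u0 - r)) as [N HN]; [lra|].
    specialize (HN N (le_n _)). unfold R_dist in HN. rewrite Rminus_0_r in HN.
    destruct (Hu N) as [VuN HuN].
    pose proof (nrm_sub_le V u0 (u N) Vu0 VuN).
    rewrite (nrm_sub_sym V u0 (u N)) in H by auto.
    pose proof (Rle_abs (nrm (vsub (u N) u0))). lra. }
  assert (nB : ~ Bl v) by (intros [_ Hb]; unfold r in Hb; lra).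
  destruct (separation V Bl v (fun c Hc => proj1 Hc) Bconv Bcl Vv nB) as [f [Hf [d [Hd Hfd]]]].
  destruct (conv_inv (r - dK)) as [N HN]; [unfold r; lra|].
  assert (H2 : pf f <= f v - d).
  { apply pf_lb; auto. exists N. intros n Hn.
    assert (Bl (xs n)).
    { split; [apply xs_V|]. pose proof (xs_nrm n). pose proof (inv_mono n N Hn). lra. }
    pose proof (Hfd _ H). lra. }
  pose proof (Hv f Hf). lra. }
intros w Kw. pose proof (dK_le w Kw). lra.
Qed.
End Exist.

Arguments vadd_assoc {_}. Arguments vadd_comm {_}. Arguments vadd_0 {_}. Arguments vadd_opp {_}.
Arguments vscal_assoc {_}. Arguments vscal_1 {_}. Arguments vscal_distr_l {_}. Arguments vscal_distr_r {_}.
Arguments ns_mem_0 {_}. Arguments ns_mem_add {_}. Arguments ns_mem_scal {_}.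
Arguments ns_norm_nonneg {_}. Arguments ns_norm_eq0 {_}. Arguments ns_norm_scal {_}.
Arguments ns_norm_triangle {_}.

Section Uniq.
Context {X : RVectorSpace} (V : NormedSubspace X).
Local Notation Vm := (ns_mem V).
Local Notation nrm := (ns_norm V).
Hypothesis SC : is_strictly_convex V.

Lemma min_unique (K : X -> Prop) u w : (forall c, K c -> Vm c) -> convex K ->
  K u -> K w -> (forall z, K z -> nrm u <= nrm z) -> (forall z, K z -> nrm w <= nrm z) -> u = w.
Proof.
intros KV Kc Ku Kw Hu Hw.
assert (Vu := KV u Ku). assert (Vw := KV w Kw).
assert (E : nrm u = nrm w) by (pose proof (Hu w Kw); pose proof (Hw u Ku); lra).
destruct (Req_dec (nrm u) 0) as [Z|NZ].
- rewrite (ns_norm_eq0 V u Vu Z), (ns_norm_eq0 V w Vw) by lra. reflexivity.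
- apply NNPP_b. intros Hne.
  set (m := nrm u) in *.
  assert (Hm : 0 < m) by (pose proof (ns_norm_nonneg V u Vu); unfold m in *; lra).
  assert (U1 : nrm (vscal (/ m) u) = 1).
  { rewrite nrm_scal_pos by (auto; left; apply Rinv_0_lt_compat; auto). fold m. apply Rinv_l; lra. }
  assert (W1 : nrm (vscal (/ m) w) = 1).
  { rewrite nrm_scal_pos by (auto; left; apply Rinv_0_lt_compat; auto). rewrite <- E. fold m. apply Rinv_l; lra. }
  assert (Hne' : vscal (/ m) u <> vscal (/ m) w).
  { intros Heq. apply Hne. apply (f_equal (vscal m)) in Heq. rewrite !vscal_assoc, Rinv_r, !vscal_1 in Heq by lra. exact Heq. }
  assert (H := SC _ _ (ns_mem_scal V _ _ Vu) (ns_mem_scal V _ _ Vw) U1 W1 Hne').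
  assert (Kh := Kc u w (1/2) Ku Kw ltac:(lra)).
  assert (Hh := Hu _ Kh).
  replace (vadd (vscal (1 / 2) u) (vscal (1 - 1 / 2) w)) with
    (vscal m (vscal (1 / 2) (vadd (vscal (/ m) u) (vscal (/ m) w)))) in Hh by vfield.
  rewrite nrm_scal_pos in Hh; [|lra|].
  + fold m in Hh. nra.
  + apply ns_mem_scal, ns_mem_add; apply ns_mem_scal; auto.
Qed.
End Uniq.

Lemma cv_transfer {X : RVectorSpace} (V : NormedSubspace X) u l u' l' :
  (forall n, ns_norm V (vsub (u' n) l') = ns_norm V (vsub (u n) l)) ->
  ns_converges V u l -> ns_converges V u' l'.
Proof.
intros H Hc e He. destruct (Hc e He) as [N HN]. exists N. intros n Hn. rewrite H. apply HN; auto.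
Qed.

Section Main.
Variable G : GradientSpace.
Variable le : gVt G -> gVt G -> Prop.
Hypothesis Hord : is_ordered_gs G le.
Local Notation X := (gVt G).
Local Notation V := (gV G).
Local Notation Vm := (ns_mem (gV G)).
Local Notation nrm := (ns_norm (gV G)).

Lemma le_refl a : le a a.
Proof. exact (proj1 (proj1 (proj1 Hord)) a). Qed.
Lemma le_trans a b c : le a b -> le b c -> le a c.
Proof. exact (proj1 (proj2 (proj1 (proj1 Hord))) a b c). Qed.
Lemma le_addl a b c : le b c -> le (vadd a b) (vadd a c).
Proof. exact (proj1 (proj2 (proj2 (proj1 (proj1 Hord)))) a b c). Qed.
Lemma le_scal a b l : le a b -> 0 <= l -> le (vscal l a) (vscal l b).
Proof. exact (proj2 (proj2 (proj2 (proj1 (proj1 Hord)))) a b l). Qed.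
Lemma le_closed (u : nat -> X) psi u0 : (forall n, Vm (u n)) -> (forall n, le (u n) psi) ->
  Vm u0 -> ns_converges V u u0 -> le u0 psi.
Proof. exact (proj2 (proj1 Hord) u psi u0). Qed.
Lemma SCV : is_strictly_convex V.
Proof. exact (proj1 (proj2 Hord)). Qed.
Lemma mono u v : Vm u -> Vm v -> le vzero u -> le u v -> nrm u <= nrm v.
Proof. exact (proj2 (proj2 Hord) u v). Qed.

Lemma le_eq a b a' b' : le a b -> a = a' -> b = b' -> le a' b'.
Proof. intros H <- <-; exact H. Qed.

Lemma cone_of_le a b : le a b -> le vzero (vsub b a).
Proof.
intros H. apply (le_eq _ _ _ _ (le_addl (vopp a) a b H)); vring.
Qed.

Lemma le_of_cone a b x : le vzero x -> vsub b a = x -> le a b.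
Proof.
intros H E. apply (le_eq _ _ _ _ (le_addl a _ _ H)).
- vring.
- rewrite <- E. vring.
Qed.

Lemma cone_add x y : le vzero x -> le vzero y -> le vzero (vadd x y).
Proof.
intros Hx Hy. apply le_trans with x; auto.
apply (le_eq _ _ _ _ (le_addl x _ _ Hy)); vring.
Qed.

Lemma le_add2 a b c d : le a b -> le c d -> le (vadd a c) (vadd b d).
Proof.
intros H1 H2. apply le_of_cone with (vadd (vsub b a) (vsub d c)).
- apply cone_add; apply cone_of_le; auto.
- vring.
Qed.

Lemma le_neg a b : le a b -> le (vopp b) (vopp a).
Proof.
intros H. apply le_of_cone with (vsub b a). apply cone_of_le; auto. vring.
Qed.

Lemma closed_upper psi : closedV V (fun u => Vm u /\ le u psi).
Proof.
intros u u0 Hu Vu0 Hc. split; auto. apply (le_closed u psi u0); auto.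
- intros n; apply (Hu n).
- intros n; apply (Hu n).
Qed.

Lemma closed_lower psi : closedV V (fun u => Vm u /\ le psi u).
Proof.
intros u u0 Hu Vu0 Hc. split; auto.
assert (H : le (vopp u0) (vopp psi)).
{ apply (le_closed (fun n => vopp (u n))); auto.
  - intros n; apply Vm_opp, (Hu n).
  - intros n; apply le_neg, (Hu n).
  - apply Vm_opp; auto.
  - apply (cv_transfer V u u0); auto. intros n.
    replace (vsub (vopp (u n)) (vopp u0)) with (vopp (vsub (u n) u0)) by vring.
    apply nrm_opp, Vm_sub; auto. apply (Hu n). }
apply le_neg in H. apply (le_eq _ _ _ _ H); vring.
Qed.

Lemma convex_upper psi : convex (fun u => Vm u /\ le u psi).
Proof.
intros x y l [Vx Hx] [Vy Hy] Hl. split.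
- apply ns_mem_add; apply ns_mem_scal; auto.
- apply (le_eq _ _ _ _ (le_add2 _ _ _ _ (le_scal _ _ l Hx ltac:(lra)) (le_scal _ _ (1 - l) Hy ltac:(lra)))).
  + reflexivity.
  + vring.
Qed.

Lemma convex_lower psi : convex (fun u => Vm u /\ le psi u).
Proof.
intros x y l [Vx Hx] [Vy Hy] Hl. split.
- apply ns_mem_add; apply ns_mem_scal; auto.
- apply (le_eq _ _ _ _ (le_add2 _ _ _ _ (le_scal _ _ l Hx ltac:(lra)) (le_scal _ _ (1 - l) Hy ltac:(lra)))).
  + vring.
  + reflexivity.
Qed.

Lemma closed_and (P Q : X -> Prop) : closedV V P -> closedV V Q -> closedV V (fun u => P u /\ Q u).
Proof.
intros HP HQ u u0 Hu Vu0 Hc. split.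
- apply (HP u u0); auto. intros n; apply (Hu n).
- apply (HQ u u0); auto. intros n; apply (Hu n).
Qed.

Lemma convex_and (P Q : X -> Prop) : convex P -> convex Q -> convex (fun u => P u /\ Q u).
Proof. intros HP HQ x y l [P1 Q1] [P2 Q2] Hl. split; [apply HP|apply HQ]; auto. Qed.

Lemma Omega_eq u1 u2 u : Omega G le u1 u2 u <->
  ((Vm u /\ le u1 u) /\ (Vm u /\ le u2 u)).
Proof. unfold Omega; tauto. Qed.

Lemma max_exists u1 u2 : Vplus G le u1 -> Vplus G le u2 -> exists m, is_max G le u1 u2 m.
Proof.
intros [V1 P1] [V2 P2].
set (K := fun u => (Vm u /\ le u1 u) /\ (Vm u /\ le u2 u)).
assert (KV : forall c, K c -> Vm c) by (intros c [[H _] _]; exact H).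
assert (Kc : convex K) by (apply convex_and; apply convex_lower).
assert (Kcl : closedV V K) by (apply closed_and; apply closed_lower).
assert (K0 : K (vadd u1 u2)).
{ split; split; try (apply ns_mem_add; auto).
  - apply (le_eq _ _ _ _ (le_addl u1 _ _ P2)); vring.
  - apply (le_eq _ _ _ _ (le_addl u2 _ _ P1)); vring. }
destruct (min_exists V (gV_reflexive G) K KV Kc Kcl (vadd u1 u2) K0) as [m [Km Hm]].
exists m. split; [|split].
- apply Omega_eq; exact Km.
- intros w Hw. apply Hm, Omega_eq; exact Hw.
- intros w Hw Hw'. apply (min_unique V SCV K w m KV Kc); auto.
  + apply Omega_eq; auto.
  + intros z Kz. apply Hw', Omega_eq; auto.
Qed.

Lemma min_exists' u1 u2 : Vplus G le u1 -> Vplus G le u2 -> exists v, is_min G le u1 u2 v.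
Proof.
intros H1 H2. destruct (max_exists u1 u2 H1 H2) as [M HM].
destruct H1 as [V1 P1], H2 as [V2 P2].
assert (VM : Vm M) by (apply (proj1 HM)).
set (O' := fun v => ((Vm v /\ le vzero v) /\ (Vm v /\ le v u1)) /\ (Vm v /\ le v u2)).
assert (O'eq : forall v, O' v <-> Omega' G le u1 u2 v) by (intros; unfold O', Omega'; tauto).
assert (O'V : forall v, O' v -> Vm v) by (intros v [[[H _] _] _]; exact H).
assert (O'c : convex O') by (unfold O'; apply convex_and; [apply convex_and; [apply convex_lower|apply convex_upper]|apply convex_upper]).
assert (O'cl : closedV V O') by (unfold O'; apply closed_and; [apply closed_and; [apply closed_lower|apply closed_upper]|apply closed_upper]).
set (K := fun z => exists v, O' v /\ z = vsub M v).
assert (KV : forall c, K c -> Vm c) by (intros c [v [Ov ->]]; apply Vm_sub; auto).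
assert (Kc : convex K).
{ intros x y l [v1 [O1 ->]] [v2 [O2 ->]] Hl.
  exists (vadd (vscal l v1) (vscal (1 - l) v2)). split; [apply O'c; auto|vring]. }
assert (Kcl : closedV V K).
{ intros u u0 Hu Vu0 Hc.
  exists (vsub M u0). split; [|vring].
  apply (O'cl (fun n => vsub M (u n))).
  - intros n. destruct (Hu n) as [v [Ov E]]. rewrite E.
    replace (vsub M (vsub M v)) with v by vring. auto.
  - apply Vm_sub; auto.
  - apply (cv_transfer V u u0); auto. intros n.
    replace (vsub (vsub M (u n)) (vsub M u0)) with (vopp (vsub (u n) u0)) by vring.
    apply nrm_opp, Vm_sub; auto. }
assert (K0 : K (vsub M vzero)).
{ exists vzero. split; auto. repeat split; auto using ns_mem_0, le_refl. }
destruct (min_exists V (gV_reflexive G) K KV Kc Kcl _ K0) as [z [[v [Ov ->]] Hz]].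
exists v. exists M. split; auto. split.
- split; [apply O'eq; auto|]. intros w Ow. apply Hz. exists w; split; auto; apply O'eq; auto.
- intros w [Ow Hw].
  assert (E : vsub M w = vsub M v).
  { apply (min_unique V SCV K); auto.
    - exists w; split; auto; apply O'eq; auto.
    - exists v; auto.
    - intros z [w' [Ow' ->]]. apply Hw, O'eq; auto. }
  replace w with (vsub M (vsub M w)) by vring. rewrite E. vring.
Qed.

Definition PA := forall u1 u2, Vplus G le u1 -> Vplus G le u2 ->
             exists v, is_Vplus_lub G le u1 u2 v.
Definition PD := forall u1 u2, Vplus G le u1 -> Vplus G le u2 ->
             exists v, is_Vplus_glb G le u1 u2 v.

Lemma Vplus_add a b : Vplus G le a -> Vplus G le b -> Vplus G le (vadd a b).
Proof. intros [Va Pa] [Vb Pb]. split; [apply ns_mem_add; auto|apply cone_add; auto]. Qed.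

Lemma A_to_D : PA -> PD.
Proof.
intros HA u1 u2 H1 H2.
destruct (HA u1 u2 H1 H2) as [m [[Vm' Pm] [L1 [L2 Lm]]]].
destruct H1 as [V1 P1], H2 as [V2 P2].
set (s := vadd u1 u2).
assert (Ps : Vplus G le s) by (apply Vplus_add; split; auto).
assert (Ls1 : le u1 s) by (apply le_of_cone with u2; auto; unfold s; vring).
assert (Ls2 : le u2 s) by (apply le_of_cone with u1; auto; unfold s; vring).
assert (ms : le m s) by (apply Lm; auto).
exists (vsub s m). split; [split|split; [|split]].
- apply Vm_sub; auto. apply ns_mem_add; auto.
- apply (le_eq _ _ _ _ (cone_of_le _ _ ms)); vring.
- apply le_of_cone with (vsub m u2); [apply cone_of_le; auto|unfold s; vring].
- apply le_of_cone with (vsub m u1); [apply cone_of_le; auto|unfold s; vring].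
- intros w [Vw Pw] W1 W2.
  set (t := vsub s w).
  assert (Vt : Vm t) by (apply Vm_sub; auto; apply ns_mem_add; auto).
  assert (Pt : le vzero t).
  { apply le_of_cone with (vadd (vsub u1 w) u2); [apply cone_add; auto; apply cone_of_le; auto|unfold t, s; vring]. }
  assert (T1 : le u1 t) by (apply le_of_cone with (vsub u2 w); [apply cone_of_le; auto|unfold t, s; vring]).
  assert (T2 : le u2 t) by (apply le_of_cone with (vsub u1 w); [apply cone_of_le; auto|unfold t, s; vring]).
  assert (mt : le m t) by (apply Lm; [split|..]; auto).
  apply le_of_cone with (vsub t m); [apply cone_of_le; auto|unfold t; vring].
Qed.

Lemma D_to_A : PD -> PA.
Proof.
intros HD u1 u2 H1 H2.
destruct (HD u1 u2 H1 H2) as [g [[Vg Pg] [G1 [G2 Lg]]]].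
destruct H1 as [V1 P1], H2 as [V2 P2].
set (s := vadd u1 u2).
assert (Vs : Vm s) by (apply ns_mem_add; auto).
assert (Ps : le vzero s) by (apply cone_add; auto).
exists (vsub s g). split; [split|split; [|split]].
- apply Vm_sub; auto.
- apply le_of_cone with (vadd (vsub u1 g) u2); [apply cone_add; auto; apply cone_of_le; auto|unfold s; vring].
- apply le_of_cone with (vsub u2 g); [apply cone_of_le; auto|unfold s; vring].
- apply le_of_cone with (vsub u1 g); [apply cone_of_le; auto|unfold s; vring].
- intros u [Vu Pu] U1 U2.
  destruct (HD u s (conj Vu Pu) (conj Vs Ps)) as [h [[Vh Ph] [Hu [Hs Lh]]]].
  assert (Ls1 : le u1 s) by (apply le_of_cone with u2; auto; unfold s; vring).
  assert (Ls2 : le u2 s) by (apply le_of_cone with u1; auto; unfold s; vring).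
  assert (H1h : le u1 h) by (apply Lh; [split|..]; auto).
  assert (H2h : le u2 h) by (apply Lh; [split|..]; auto).
  set (w := vsub s h).
  assert (wg : le w g).
  { apply Lg.
    - split; [apply Vm_sub; auto|]. apply cone_of_le; auto.
    - apply le_of_cone with (vsub h u2); [apply cone_of_le; auto|unfold w, s; vring].
    - apply le_of_cone with (vsub h u1); [apply cone_of_le; auto|unfold w, s; vring]. }
  apply le_of_cone with (vadd (vsub u h) (vsub g w)); [apply cone_add; apply cone_of_le; auto|unfold w; vring].
Qed.

Theorem main_equiv :
  let A := forall u1 u2, Vplus G le u1 -> Vplus G le u2 ->
             exists v, is_Vplus_lub G le u1 u2 v in
  let B := forall u1 u2, Vplus G le u1 -> Vplus G le u2 ->
             forall m, is_max G le u1 u2 m -> is_Vplus_lub G le u1 u2 m in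
  let C := Vplus_lattice G le in
  let D := forall u1 u2, Vplus G le u1 -> Vplus G le u2 ->
             exists v, is_Vplus_glb G le u1 u2 v in
  let E := forall u1 u2, Vplus G le u1 -> Vplus G le u2 ->
             forall m, is_min G le u1 u2 m -> is_Vplus_glb G le u1 u2 m in
  (A <-> B) /\ (A <-> C) /\ (A <-> D) /\ (A <-> E).
Proof.
intros A B C D E.
assert (AD : A -> D) by exact A_to_D.
assert (DA : D -> A) by exact D_to_A.
assert (DE : D -> E).
{ intros HD u1 u2 H1 H2 v [M [HM [[Ov Hv] Hu]]].
  destruct (HD u1 u2 H1 H2) as [g Hg].
  assert (Eg : g = v).
  { apply Hu. split.
    - destruct Hg as [[Vg Pg] [G1 [G2 _]]]. repeat split; auto.
    - intros w Ow. destruct Hg as [[Vg Pg] [G1 [G2 Lg]]].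
      destruct Ow as [Vw [Pw [W1 W2]]].
      destruct HM as [[VM [M1 M2]] _].
      apply mono.
      + apply Vm_sub; auto.
      + apply Vm_sub; auto.
      + apply cone_of_le. apply le_trans with u1; auto.
      + apply le_of_cone with (vsub g w); [apply cone_of_le; apply Lg; [split|..]; auto|vring]. }
  rewrite <- Eg; exact Hg. }
assert (ED : E -> D).
{ intros HE u1 u2 H1 H2. destruct (min_exists' u1 u2 H1 H2) as [v Hv].
  exists v. apply HE; auto. }
split; [|split; [|split]].
- split.
  + intros HA u1 u2 H1 H2 m Hm.
    destruct (HA u1 u2 H1 H2) as [v Hv].
    assert (Evm : v = m).
    { destruct Hm as [Om [Mm Um]]. apply Um.
      - destruct Hv as [[Vv _] [L1 [L2 _]]]. repeat split; auto.
      - intros w Ow. eapply Rle_trans; [|apply Mm; exact Ow].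
        destruct Hv as [[Vv Pv] [L1 [L2 Lv]]].
        destruct Om as [VM [M1 M2]].
        apply mono; auto. apply Lv; auto. split; auto.
        apply le_trans with u1; auto. apply (proj2 H1). }
    rewrite <- Evm; exact Hv.
  + intros HB u1 u2 H1 H2. destruct (max_exists u1 u2 H1 H2) as [m Hm].
    exists m; apply HB; auto.
- split.
  + intros HA u1 u2 H1 H2. split; [apply HA|apply AD]; auto.
  + intros HC u1 u2 H1 H2. exact (proj1 (HC u1 u2 H1 H2)).
- split; auto.
- split; auto.
Qed.
End Main.


Theorem mainTheorem17 (G : GradientSpace) (le : gVt G -> gVt G -> Prop)
  (Hord : is_ordered_gs G le) :
  let A := forall u1 u2, Vplus G le u1 -> Vplus G le u2 ->
             exists v, is_Vplus_lub G le u1 u2 v in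
  let B := forall u1 u2, Vplus G le u1 -> Vplus G le u2 ->
             forall m, is_max G le u1 u2 m -> is_Vplus_lub G le u1 u2 m in
  let C := Vplus_lattice G le in
  let D := forall u1 u2, Vplus G le u1 -> Vplus G le u2 ->
             exists v, is_Vplus_glb G le u1 u2 v in
  let E := forall u1 u2, Vplus G le u1 -> Vplus G le u2 ->
             forall m, is_min G le u1 u2 m -> is_Vplus_glb G le u1 u2 m in
  (A <-> B) /\ (A <-> C) /\ (A <-> D) /\ (A <-> E).
Proof. exact (main_equiv G le Hord). Qed.
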